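(* Let $N\to\infty$, let $h=h(N)$ satisfy $h\to\infty$ and $h=o(N)$, and let $Q=Q(N)\to\infty$ with $Q\ll N$. Let $g:\mathbb{N}\to\mathbb{R}$ satisfy, for every $\varepsilon>0$, $g(q)\ll_{\varepsilon}N^{\varepsilon}$ for all $q\le Q$. Let $f:\mathbb{N}\cup\{0\}\to\mathbb{R}$ and $S_f(\alpha)=\Re\sum_{0\le n\le N}f(n)e(n\alpha)$. If $S_f(\alpha)\ge0$ for all $\alpha\in[0,1]$, then $$\sum_{q\le Q}\frac{g(q)}{q}\sum_{j\,(\mathrm{mod}\,q)}\widehat{W}\Big(\frac jq\Big)S_f\Big(-\frac jq\Big)\lll\sum_{q\le Q}\frac1q\sum_{j\,(\mathrm{mod}\,q)}\widehat{W}\Big(\frac jq\Big)S_f\Big(-\frac jq\Big).$$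
   Context: $e(x)=e^{2\pi i x}$. For integers $a\in[-2h,2h]$, $W(a)=\max(2h-3|a|,\,|a|-2h)$, and $W(a)=0$ otherwise. Its discrete Fourier transform is $\widehat{W}(\beta)=\sum_a W(a)e(a\beta)$ for $\beta\in\mathbb{R}$. The inner sums run over a complete residue system modulo $q$. The notation $A\lll B$ means: for every $\varepsilon>0$, $A\ll_{\varepsilon}N^{\varepsilon}B$. *)

(* Defs.v *)
From Stdlib Require Import Reals Lra Lia ZArith Arith List.
Open Scope R_scope.

Definition lsum (s : list nat) (F : nat -> R) : R :=
  fold_right Rplus 0 (map F s).

Definition Wfun (h : R) (a : Z) : R :=
  if Rle_dec (Rabs (IZR a)) (2 * h)
  then Rmax (2 * h - 3 * Rabs (IZR a)) (Rabs (IZR a) - 2 * h)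
  else 0.

(* Bound K with every integer a in [-2h,2h] satisfying |a| <= K. *)
Definition Wbound (h : R) : nat := Z.abs_nat (up (2 * h)).

(* Fourier transform What(beta) = sum_a W(a) e(a beta).  Since W(-a) = W(a),
   this equals sum_a W(a) cos(2 pi a beta) (a real number). *)
Definition What (h : R) (beta : R) : R :=
  let K := Wbound h in
  lsum (seq 0 (2 * K + 1))
    (fun k => let a := (Z.of_nat k - Z.of_nat K)%Z in
              Wfun h a * cos (2 * PI * IZR a * beta)).

(* S_f(alpha) = Re sum_{0<=n<=N} f(n) e(n alpha) = sum f(n) cos(2 pi n alpha), f real. *)
Definition Sf (f : nat -> R) (N : nat) (alpha : R) : R :=
  sum_f_R0 (fun n => f n * cos (2 * PI * INR n * alpha)) N.

(* inner sum over a complete residue system j = 0, ..., q-1 *)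
Definition inner (h : R) (f : nat -> R) (N q : nat) : R :=
  lsum (seq 0 q) (fun j => What h (INR j / INR q) * Sf f N (- (INR j / INR q))).

Definition nbelow (Q : R) : nat := Z.to_nat (Int_part Q).

Definition Tsum (c : nat -> R) (h Q : R) (f : nat -> R) (N : nat) : R :=
  lsum (seq 1 (nbelow Q)) (fun q => c q / INR q * inner h f N q).

(* Main.v *)
Require Import Defs.
From Stdlib Require Import Reals Lra Lia ZArith Arith List Psatz FunctionalExtensionality.
Open Scope R_scope.

Lemma lsum_cons x s F : lsum (x::s) F = F x + lsum s F.
Proof. reflexivity. Qed.
Lemma lsum_nil F : lsum nil F = 0.
Proof. reflexivity. Qed.
Lemma lsum_app s1 s2 F : lsum (s1++s2) F = lsum s1 F + lsum s2 F.
Proof. induction s1 as [|x s1 IH]; unfold lsum in *; simpl; [ring| rewrite IH; ring]. Qed.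
Lemma lsum_ext s F G : (forall x, In x s -> F x = G x) -> lsum s F = lsum s G.
Proof. induction s as [|x s IH]; intros H; [reflexivity|].
  rewrite !lsum_cons. rewrite (H x) by (simpl; auto).
  rewrite IH; [reflexivity|]. intros; apply H; simpl; auto. Qed.
Lemma lsum_plus s F G : lsum s (fun x => F x + G x) = lsum s F + lsum s G.
Proof. induction s as [|x s IH]; [unfold lsum; simpl; ring|rewrite !lsum_cons, IH; ring]. Qed.
Lemma lsum_minus s F G : lsum s (fun x => F x - G x) = lsum s F - lsum s G.
Proof. induction s as [|x s IH]; [unfold lsum; simpl; ring|rewrite !lsum_cons, IH; ring]. Qed.
Lemma lsum_scal s c F : lsum s (fun x => c * F x) = c * lsum s F.
Proof. induction s as [|x s IH]; [unfold lsum; simpl; ring|rewrite !lsum_cons, IH; ring]. Qed.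
Lemma lsum_le s F G : (forall x, In x s -> F x <= G x) -> lsum s F <= lsum s G.
Proof. induction s as [|x s IH]; intros H; [unfold lsum; simpl; lra|].
  rewrite !lsum_cons. assert (F x <= G x) by (apply H; simpl; auto).
  assert (lsum s F <= lsum s G) by (apply IH; intros; apply H; simpl; auto). lra. Qed.
Lemma lsum_zero s : lsum s (fun _ => 0) = 0.
Proof. induction s as [|x s IH]; [reflexivity|rewrite lsum_cons, IH; ring]. Qed.
Lemma lsum_nonneg s F : (forall x, In x s -> 0 <= F x) -> 0 <= lsum s F.
Proof. intros H. rewrite <- (lsum_zero s). apply lsum_le; auto. Qed.
Lemma lsum_abs s F : Rabs (lsum s F) <= lsum s (fun x => Rabs (F x)).
Proof. induction s as [|x s IH]; [unfold lsum; simpl; rewrite Rabs_R0; lra|].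
  rewrite !lsum_cons. eapply Rle_trans; [apply Rabs_triang|lra]. Qed.
Lemma lsum_shift a n F : lsum (seq (S a) n) F = lsum (seq a n) (fun k => F (S k)).
Proof. rewrite <- seq_shift. unfold lsum. rewrite map_map. reflexivity. Qed.
Lemma lsum_delta n j x : (j < n)%nat ->
  lsum (seq 0 n) (fun k => if Nat.eq_dec k j then x else 0) = x.
Proof.
  induction n as [|n IH]; intros Hj; [lia|].
  rewrite seq_S, lsum_app. simpl plus. rewrite lsum_cons, lsum_nil.
  destruct (Nat.eq_dec n j) as [->|Hne].
  - rewrite (lsum_ext _ _ (fun _ => 0)). rewrite lsum_zero. unfold lsum; simpl; ring.
    intros k Hk. apply in_seq in Hk. destruct (Nat.eq_dec k j); [lia|reflexivity].
  - rewrite IH by lia. unfold lsum; simpl; ring.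
Qed.

Definition zsum (K : nat) (F : Z -> R) : R :=
  lsum (seq 0 (2*K+1)) (fun k => F (Z.of_nat k - Z.of_nat K)%Z).

Lemma zsum_shift K F : zsum K (fun a => F (a+1)%Z) =
  zsum K F - F (- Z.of_nat K)%Z + F (Z.of_nat K + 1)%Z.
Proof.
  unfold zsum. set (G := fun k => F (Z.of_nat k - Z.of_nat K)%Z).
  rewrite (lsum_ext _ _ (fun k => G (S k))).
  2:{ intros k _. unfold G. f_equal. lia. }
  rewrite <- lsum_shift.
  assert (E1 : lsum (seq 0 (S (2*K+1))) G = G 0%nat + lsum (seq 1 (2*K+1)) G) by reflexivity.
  rewrite seq_S, lsum_app in E1.
  replace (0 + (2*K+1))%nat with (2*K+1)%nat in E1 by lia.
  rewrite lsum_cons, lsum_nil in E1.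
  assert (G 0%nat = F (- Z.of_nat K)%Z) by (unfold G; f_equal; lia).
  assert (G (2*K+1)%nat = F (Z.of_nat K + 1)%Z) by (unfold G; f_equal; lia).
  lra.
Qed.

Lemma zsum_shiftm K F : zsum K (fun a => F (a-1)%Z) =
  zsum K F - F (Z.of_nat K)%Z + F (- Z.of_nat K - 1)%Z.
Proof.
  pose proof (zsum_shift K (fun a => F (a-1)%Z)) as H.
  assert (E : (fun a => F (a+1-1)%Z) = F).
  { apply functional_extensionality. intros; f_equal; lia. }
  cbv beta in H. rewrite E in H.
  replace (Z.of_nat K + 1 - 1)%Z with (Z.of_nat K) in H by lia.
  simpl in H. lra.
Qed.

Definition Wz (m a : Z) : Z := if (Z.abs a <=? m)%Z then Z.max (m - 3*Z.abs a) (Z.abs a - m) else 0%Z.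
Lemma Wz_val m a : (0 <= m)%Z -> Wz m a =
  if (Z.abs a <=? m)%Z then (if (2*Z.abs a <=? m)%Z then m - 3*Z.abs a else Z.abs a - m)%Z else 0%Z.
Proof. intros. unfold Wz. destruct (Z.leb_spec (Z.abs a) m); [|reflexivity].
  destruct (Z.leb_spec (2*Z.abs a) m); lia. Qed.

Open Scope Z_scope.
Definition iz (s b : Z) : Z := if Z.eq_dec b s then 1 else 0.
Definition Dz m b := 2 * Wz m b - Wz m (b-1) - Wz m (b+1).
Definition SE k b := 6*iz 0 b - 4*iz k b - 4*iz (-k) b + iz (2*k) b + iz (-2*k) b.
Definition SO k b := 6*iz 0 b - 2*iz k b - 2*iz (-k) b - 2*iz (k+1) b - 2*iz (-k-1) b
   + iz (2*k+1) b + iz (-2*k-1) b.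

Ltac absb b :=
  destruct (Z.lt_trichotomy b 0) as [Hb|[Hb|Hb]];
  [rewrite (Z.abs_neq b), (Z.abs_neq (b-1)), (Z.abs_neq (b+1)) by lia
  |subst b; simpl Z.abs
  |rewrite (Z.abs_eq b), (Z.abs_eq (b-1)), (Z.abs_eq (b+1)) by lia].

Ltac finish :=
  repeat match goal with |- context [Z.eq_dec ?x ?y] =>
     first [ destruct (Z.eq_dec x y); [try subst x|]; try (exfalso; lia)] end;
  repeat match goal with |- context [Z.leb ?x ?y] =>
     first [rewrite (proj2 (Z.leb_le x y)) by lia | rewrite (proj2 (Z.leb_gt x y)) by lia
           | destruct (Z.leb_spec x y)] end; lia.

Lemma DzE k b : 0 <= k -> Dz (2*k) b = SE k b.
Proof. intros Hk. unfold Dz, SE, iz. rewrite !Wz_val by lia. absb b; finish. Qed.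
Lemma DzO k b : 0 <= k -> Dz (2*k+1) b = SO k b.
Proof. intros Hk. unfold Dz, SO, iz. rewrite !Wz_val by lia. absb b; finish. Qed.

Open Scope R_scope.

Lemma W_interp (n : Z) (h : R) (a : Z) : (0 <= n)%Z -> IZR n <= 2*h < IZR n + 1 ->
  Wfun h a = (IZR n + 1 - 2*h) * IZR (Wz n a) + (2*h - IZR n) * IZR (Wz (n+1) a).
Proof.
  intros Hn Hh. unfold Wfun. rewrite Rabs_Zabs. rewrite !Wz_val by lia.
  set (A := Z.abs a). assert (HA : (0 <= A)%Z) by (unfold A; lia). clearbody A.
  destruct (Z.le_gt_cases A n) as [H1|H1].
  - rewrite (proj2 (Z.leb_le A n)) by lia. rewrite (proj2 (Z.leb_le A (n+1))) by lia.
    assert (IZR A <= IZR n) by (apply IZR_le; lia).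
    destruct (Rle_dec (IZR A) (2*h)) as [_|C]; [|lra].
    destruct (Z.le_gt_cases (2*A) n) as [H2|H2].
    + rewrite (proj2 (Z.leb_le (2*A) n)) by lia. rewrite (proj2 (Z.leb_le (2*A) (n+1))) by lia.
      assert (2*IZR A <= IZR n) by (rewrite <- mult_IZR; apply IZR_le; lia).
      rewrite !minus_IZR, !mult_IZR, !plus_IZR.
      unfold Rmax; destruct Rle_dec; lra.
    + rewrite (proj2 (Z.leb_gt (2*A) n)) by lia.
      assert (IZR n + 1 <= 2*IZR A) by (rewrite <- mult_IZR; rewrite <- plus_IZR; apply IZR_le; lia).
      destruct (Z.leb_spec (2*A) (n+1)).
      * assert (2*IZR A = IZR n + 1) by (rewrite <- mult_IZR, <- plus_IZR; apply IZR_eq; lia).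
        rewrite !minus_IZR, !mult_IZR, !plus_IZR.
        unfold Rmax; destruct Rle_dec; [|lra].
        replace (IZR n) with (2*IZR A - 1) by lra. ring.
      * rewrite !minus_IZR, !plus_IZR.
        unfold Rmax; destruct Rle_dec; lra.
  - rewrite (proj2 (Z.leb_gt A n)) by lia.
    assert (IZR n + 1 <= IZR A) by (rewrite <- plus_IZR; apply IZR_le; lia).
    destruct (Rle_dec (IZR A) (2*h)) as [C|_]; [lra|].
    destruct (Z.leb_spec A (n+1)).
    + assert (A = n+1)%Z by lia. subst A.
      rewrite (proj2 (Z.leb_gt (2*(n+1)) (n+1))) by lia.
      replace (n+1-(n+1))%Z with 0%Z by ring. lra.
    + lra.
Qed.


Lemma zsum_ext K F G : (forall b, F b = G b) -> zsum K F = zsum K G.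
Proof. intros H. unfold zsum. apply lsum_ext. intros; apply H. Qed.
Lemma zsum_plus K F G : zsum K (fun b => F b + G b) = zsum K F + zsum K G.
Proof. unfold zsum. apply lsum_plus. Qed.
Lemma zsum_minus K F G : zsum K (fun b => F b - G b) = zsum K F - zsum K G.
Proof. unfold zsum. apply lsum_minus. Qed.
Lemma zsum_scal K c F : zsum K (fun b => c * F b) = c * zsum K F.
Proof. unfold zsum. apply lsum_scal. Qed.

Lemma zsum_delta K s phi : (- Z.of_nat K <= s <= Z.of_nat K)%Z ->
  zsum K (fun b => IZR (iz s b) * phi b) = phi s.
Proof.
  intros Hs. unfold zsum.
  rewrite (lsum_ext _ _ (fun k => if Nat.eq_dec k (Z.to_nat (s + Z.of_nat K)) then phi s else 0)).
  - apply lsum_delta. lia.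
  - intros k _. unfold iz. destruct (Z.eq_dec _ s); destruct (Nat.eq_dec _ _).
    + rewrite <- e. ring.
    + lia.
    + lia.
    + ring.
Qed.

Lemma sbp K W phi : W (- Z.of_nat K - 1)%Z = 0 -> W (Z.of_nat K) = 0 ->
  W (Z.of_nat K + 1)%Z = 0 -> W (- Z.of_nat K)%Z = 0 ->
  zsum K (fun b => W b * (2 * phi b - phi (b+1)%Z - phi (b-1)%Z)) =
  zsum K (fun b => (2 * W b - W (b-1)%Z - W (b+1)%Z) * phi b).
Proof.
  intros H1 H2 H3 H4.
  rewrite (zsum_ext _ _ (fun b => (2 * (W b * phi b) - W b * phi (b+1)%Z) - W b * phi (b-1)%Z))
    by (intros; ring).
  rewrite (zsum_ext K (fun b => (2 * W b - W (b-1)%Z - W (b+1)%Z) * phi b)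
     (fun b => (2 * (W b * phi b) - W (b-1)%Z * phi b) - W (b+1)%Z * phi b)) by (intros; ring).
  rewrite !zsum_minus, !zsum_scal.
  rewrite (zsum_ext K (fun b => W b * phi (b+1)%Z) (fun b => (fun c => W (c-1)%Z * phi c) (b+1)%Z))
    by (intros; cbv beta; rewrite Z.add_simpl_r; reflexivity).
  rewrite (zsum_ext K (fun b => W b * phi (b-1)%Z) (fun b => (fun c => W (c+1)%Z * phi c) (b-1)%Z))
    by (intros; cbv beta; rewrite Z.sub_simpl_r; reflexivity).
  rewrite (zsum_shift K (fun c => W (c-1)%Z * phi c)).
  rewrite (zsum_shiftm K (fun c => W (c+1)%Z * phi c)). cbv beta.
  replace (- Z.of_nat K - 1)%Z with (- Z.of_nat K - 1)%Z by reflexivity.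
  replace (Z.of_nat K + 1 - 1)%Z with (Z.of_nat K) by ring.
  replace (Z.of_nat K + 1)%Z with (Z.of_nat K + 1)%Z by reflexivity.
  replace (- Z.of_nat K - 1 + 1)%Z with (- Z.of_nat K)%Z by ring.
  rewrite H1, H2, H3, H4. ring.
Qed.

Definition SEv (k : Z) (phi : Z -> R) :=
  6 * phi 0%Z - 4 * phi k - 4 * phi (-k)%Z + phi (2*k)%Z + phi (-2*k)%Z.
Definition SOv (k : Z) (phi : Z -> R) :=
  6 * phi 0%Z - 2 * phi k - 2 * phi (-k)%Z - 2 * phi (k+1)%Z - 2 * phi (-k-1)%Z
  + phi (2*k+1)%Z + phi (-2*k-1)%Z.

Lemma zsum_SE K k phi : (0 <= k)%Z -> (2*k <= Z.of_nat K)%Z ->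
  zsum K (fun b => IZR (SE k b) * phi b) = SEv k phi.
Proof.
  intros. unfold SE, SEv.
  rewrite (zsum_ext _ _ (fun b => 6 * (IZR (iz 0 b) * phi b) - 4 * (IZR (iz k b) * phi b)
     - 4 * (IZR (iz (-k) b) * phi b) + (IZR (iz (2*k) b) * phi b) + (IZR (iz (-2*k) b) * phi b))).
  2:{ intros b. rewrite !plus_IZR, !minus_IZR, !mult_IZR. ring. }
  rewrite !zsum_plus, !zsum_minus, !zsum_scal, !zsum_delta by lia. ring.
Qed.

Lemma zsum_SO K k phi : (0 <= k)%Z -> (2*k+1 <= Z.of_nat K)%Z ->
  zsum K (fun b => IZR (SO k b) * phi b) = SOv k phi.
Proof.
  intros. unfold SO, SOv.
  rewrite (zsum_ext _ _ (fun b => 6 * (IZR (iz 0 b) * phi b) - 2 * (IZR (iz k b) * phi b)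
     - 2 * (IZR (iz (-k) b) * phi b) - 2 * (IZR (iz (k+1) b) * phi b) - 2 * (IZR (iz (-k-1) b) * phi b)
     + (IZR (iz (2*k+1) b) * phi b) + (IZR (iz (-2*k-1) b) * phi b))).
  2:{ intros b. rewrite !plus_IZR, !minus_IZR, !mult_IZR. ring. }
  rewrite !zsum_plus, !zsum_minus, !zsum_scal, !zsum_delta by lia. ring.
Qed.


Lemma What_eq h beta : What h beta = zsum (Wbound h) (fun a => Wfun h a * cos (2*PI*IZR a*beta)).
Proof. reflexivity. Qed.

Lemma key h phi : 0 <= h -> exists c1 c2 k1 k2 X1 X2, 0 <= c1 /\ 0 <= c2 /\ (0 <= k1)%Z /\ (0 <= k2)%Z /\
  ((X1 = SEv k1 phi /\ X2 = SOv k2 phi) \/ (X1 = SOv k1 phi /\ X2 = SEv k2 phi)) /\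
  zsum (Wbound h) (fun b => Wfun h b * (2 * phi b - phi (b+1)%Z - phi (b-1)%Z)) = c1 * X1 + c2 * X2.
Proof.
  intros Hh.
  destruct (archimed (2*h)) as [Hu1 Hu2].
  set (u := up (2*h)) in *.
  assert (Hu : (0 < u)%Z) by (apply lt_IZR; lra).
  set (n := (u - 1)%Z).
  assert (Hn : IZR n <= 2*h < IZR n + 1) by (unfold n; rewrite minus_IZR; simpl; lra).
  assert (Hn0 : (0 <= n)%Z) by (unfold n; lia).
  assert (HK : Z.of_nat (Wbound h) = (n+1)%Z).
  { unfold Wbound. fold u. rewrite Nat2Z.inj_abs_nat. unfold n; lia. }
  set (K := Wbound h) in *.
  assert (Wz0 : forall c, (n + 1 <= Z.abs c)%Z -> Wfun h c = 0).
  { intros c Hc. unfold Wfun. rewrite Rabs_Zabs. destruct Rle_dec as [C|C]; [|reflexivity].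
    assert (IZR (n+1) <= IZR (Z.abs c)) by (apply IZR_le; lia). rewrite plus_IZR in H. lra. }
  rewrite sbp by (apply Wz0; lia).
  rewrite (zsum_ext _ _ (fun b => (IZR n + 1 - 2*h) * (IZR (Dz n b) * phi b)
        + (2*h - IZR n) * (IZR (Dz (n+1) b) * phi b))).
  2:{ intros b. unfold Dz. rewrite !(W_interp n h) by assumption.
      rewrite !minus_IZR, !mult_IZR. ring. }
  rewrite zsum_plus, !zsum_scal.
  exists (IZR n + 1 - 2*h), (2*h - IZR n).
  destruct (Z.Even_or_Odd n) as [[k Hk]|[k Hk]].
  - rewrite (zsum_ext _ _ (fun b => IZR (SE k b) * phi b)) by (intros; rewrite Hk, DzE by lia; reflexivity).
    rewrite (zsum_ext _ (fun b => IZR (Dz (n+1) b) * phi b) (fun b => IZR (SO k b) * phi b))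
      by (intros; rewrite Hk, DzO by lia; reflexivity).
    rewrite zsum_SE, zsum_SO by lia.
    exists k, k, (SEv k phi), (SOv k phi). repeat split; try lra; try lia; left; split; reflexivity.
  - rewrite (zsum_ext _ _ (fun b => IZR (SO k b) * phi b)) by (intros; rewrite Hk, DzO by lia; reflexivity).
    rewrite (zsum_ext _ (fun b => IZR (Dz (n+1) b) * phi b) (fun b => IZR (SE (k+1) b) * phi b)).
    2:{ intros. replace (n+1)%Z with (2*(k+1))%Z by lia. rewrite DzE by lia; reflexivity. }
    rewrite zsum_SE, zsum_SO by lia.
    exists k, (k+1)%Z, (SOv k phi), (SEv (k+1) phi). repeat split; try lra; try lia; right; split; reflexivity.
Qed.


Lemma cosarg_plus beta b : cos (2*PI*IZR (b+1)*beta) = cos (2*PI*IZR b*beta + 2*PI*beta).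
Proof. rewrite plus_IZR. f_equal. ring. Qed.
Lemma cosarg_minus beta b : cos (2*PI*IZR (b-1)*beta) = cos (2*PI*IZR b*beta - 2*PI*beta).
Proof. rewrite minus_IZR. f_equal. ring. Qed.

Lemma SEv_cos beta k : 0 <= SEv k (fun b => cos (2*PI*IZR b*beta)).
Proof.
  unfold SEv. set (x := 2*PI*IZR k*beta).
  replace (2*PI*IZR 0*beta) with 0 by (simpl; ring).
  replace (2*PI*IZR (-k)*beta) with (-x) by (unfold x; rewrite opp_IZR; ring).
  replace (2*PI*IZR (2*k)*beta) with (2*x) by (unfold x; rewrite mult_IZR; simpl; ring).
  replace (2*PI*IZR (-2*k)*beta) with (-(2*x)) by (unfold x; rewrite mult_IZR; simpl; ring).
  rewrite !cos_neg, cos_0, cos_2a_cos. clearbody x.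
  match goal with |- 0 <= ?e => replace e with (4*((1-cos x)*(1-cos x))) by ring end.
  pose proof (Rle_0_sqr (1 - cos x)). unfold Rsqr in *. lra.
Qed.

Lemma SOv_cos beta k : 0 <= SOv k (fun b => cos (2*PI*IZR b*beta)).
Proof.
  unfold SOv. set (x := 2*PI*IZR k*beta). set (y := 2*PI*IZR (k+1)*beta).
  replace (2*PI*IZR 0*beta) with 0 by (simpl; ring).
  replace (2*PI*IZR (-k)*beta) with (-x) by (unfold x; rewrite opp_IZR; ring).
  replace (2*PI*IZR (-k-1)*beta) with (-y) by (unfold y; repeat first [rewrite plus_IZR | rewrite mult_IZR | rewrite minus_IZR | rewrite opp_IZR]; ring).
  replace (2*PI*IZR (2*k+1)*beta) with (x+y) by (unfold x, y; repeat first [rewrite plus_IZR | rewrite mult_IZR | rewrite minus_IZR | rewrite opp_IZR]; ring).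
  replace (2*PI*IZR (-2*k-1)*beta) with (-(x+y)) by (unfold x, y; repeat first [rewrite plus_IZR | rewrite mult_IZR | rewrite minus_IZR | rewrite opp_IZR]; ring).
  rewrite !cos_neg, cos_0, cos_plus. clearbody x y.
  pose proof (sin2_cos2 x). pose proof (sin2_cos2 y). unfold Rsqr in *.
  pose proof (COS_bound x). pose proof (COS_bound y).
  assert (0 <= (1 - cos x) * (1 - cos y)) by (apply Rmult_le_pos; lra).
  pose proof (Rle_0_sqr (cos x - cos y)). pose proof (Rle_0_sqr (sin x - sin y)). unfold Rsqr in *.
  match goal with |- 0 <= ?e => replace e with (4*((1 - cos x) * (1 - cos y)) +
     (cos x - cos y) * (cos x - cos y) + (sin x - sin y) * (sin x - sin y)
     - (sin x * sin x + cos x * cos x - 1) - (sin y * sin y + cos y * cos y - 1)) by ring end.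
  lra.
Qed.

Lemma SEv_sq k : SEv k (fun b => IZR b * IZR b) = 0.
Proof. unfold SEv. rewrite !mult_IZR, !opp_IZR. simpl. ring. Qed.
Lemma SOv_sq k : SOv k (fun b => IZR b * IZR b) = -2.
Proof. unfold SOv. rewrite !plus_IZR, !minus_IZR, !mult_IZR, !opp_IZR, ?plus_IZR. simpl. ring. Qed.

Lemma What_nonneg h beta : 0 <= beta < 1 -> 0 <= What h beta.
Proof.
  intros Hb. rewrite What_eq.
  destruct (Rlt_or_le h 0) as [Hh|Hh].
  - unfold zsum. apply lsum_nonneg. intros k _. unfold Wfun.
    destruct Rle_dec as [C|C]; [|lra]. pose proof (Rabs_pos (IZR (Z.of_nat k - Z.of_nat (Wbound h)))). lra.
  - destruct (Req_dec beta 0) as [->|Hb0].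
    + destruct (key h (fun b => IZR b * IZR b) Hh) as (c1 & c2 & k1 & k2 & X1 & X2 & H1 & H2 & _ & _ & HX & E).
      rewrite (zsum_ext _ _ (fun b => -2 * (Wfun h b * cos (2*PI*IZR b*0)))) in E.
      2:{ intros b. rewrite Rmult_0_r, cos_0, plus_IZR, minus_IZR. simpl. ring. }
      rewrite zsum_scal in E.
      destruct HX as [[-> ->]|[-> ->]]; rewrite ?SEv_sq, ?SOv_sq in E; nra.
    + destruct (key h (fun b => cos (2*PI*IZR b*beta)) Hh) as (c1 & c2 & k1 & k2 & X1 & X2 & H1 & H2 & _ & _ & HX & E).
      rewrite (zsum_ext _ _ (fun b => (2 - 2 * cos (2*PI*beta)) * (Wfun h b * cos (2*PI*IZR b*beta)))) in E.
      2:{ intros b. rewrite cosarg_plus, cosarg_minus, cos_plus, cos_minus. ring. }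
      rewrite zsum_scal in E.
      assert (Hc : cos (2*PI*beta) < 1).
      { replace (2*PI*beta) with (2*(PI*beta)) by ring. rewrite cos_2a_sin.
        assert (0 < sin (PI*beta)) by (apply sin_gt_0; pose proof PI_RGT_0; nra). nra. }
      assert (0 <= X1 /\ 0 <= X2) as [HX1 HX2] by
        (destruct HX as [[-> ->]|[-> ->]]; split; auto using SEv_cos, SOv_cos).
      assert (0 <= c1 * X1 + c2 * X2) by nra.
      rewrite <- E in H.
      set (w := zsum _ _) in H.
      destruct (Rle_or_lt 0 w); [assumption|nra].
Qed.


Lemma Sf_neg f N x : Sf f N (-x) = Sf f N x.
Proof. unfold Sf. apply sum_eq. intros i _. f_equal.
  replace (2 * PI * INR i * - x) with (- (2 * PI * INR i * x)) by ring. apply cos_neg. Qed.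

Lemma inner_nonneg h f N q : (1 <= q)%nat -> (forall alpha, 0 <= alpha <= 1 -> 0 <= Sf f N alpha) ->
  0 <= inner h f N q.
Proof.
  intros Hq Hf. unfold inner. apply lsum_nonneg. intros j Hj. apply in_seq in Hj.
  assert (Hq0 : 0 < INR q) by (apply lt_0_INR; lia).
  assert (Hjq : INR j < INR q) by (apply lt_INR; lia).
  assert (H0 : 0 <= INR j / INR q) by (unfold Rdiv; apply Rmult_le_pos; [apply pos_INR| left; apply Rinv_0_lt_compat; lra]).
  assert (H1 : INR j / INR q < 1).
  { apply Rmult_lt_reg_r with (INR q); [lra|]. unfold Rdiv. rewrite Rmult_assoc, Rinv_l by lra. lra. }
  apply Rmult_le_pos.
  - apply What_nonneg; lra.
  - rewrite Sf_neg. apply Hf; lra.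
Qed.

Theorem lemma2 (h Q : nat -> R) (g : nat -> R) (f : nat -> nat -> R) :
  (* h -> infinity *)
  (forall M : R, exists N0 : nat, forall N : nat, (N0 <= N)%nat -> M <= h N) ->
  (* h = o(N) *)
  (forall eps : R, 0 < eps -> exists N0 : nat, forall N : nat, (N0 <= N)%nat ->
     Rabs (h N) <= eps * INR N) ->
  (* Q -> infinity *)
  (forall M : R, exists N0 : nat, forall N : nat, (N0 <= N)%nat -> M <= Q N) ->
  (* Q << N *)
  (exists C : R, exists N0 : nat, forall N : nat, (N0 <= N)%nat -> Q N <= C * INR N) ->
  (* g(q) <<_eps N^eps for q <= Q *)
  (forall eps : R, 0 < eps -> exists C : R, forall (N q : nat), (1 <= N)%nat ->
     (1 <= q)%nat -> INR q <= Q N -> Rabs (g q) <= C * Rpower (INR N) eps) ->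
  (* S_f >= 0 on [0,1] *)
  (forall (N : nat) (alpha : R), 0 <= alpha <= 1 -> 0 <= Sf (f N) N alpha) ->
  (* conclusion: LHS <<< RHS *)
  forall eps : R, 0 < eps -> exists C : R, exists N0 : nat, forall N : nat,
    (N0 <= N)%nat ->
    Rabs (Tsum g (h N) (Q N) (f N) N)
      <= C * Rpower (INR N) eps * Tsum (fun _ => 1) (h N) (Q N) (f N) N.
Proof.
  intros _ _ _ _ Hg Hf eps Heps.
  destruct (Hg eps Heps) as [C HC]. exists C, 1%nat. intros N HN.
  unfold Tsum. eapply Rle_trans; [apply lsum_abs|].
  rewrite <- lsum_scal. apply lsum_le. intros q Hq. apply in_seq in Hq.
  assert (Hq0 : 0 < INR q) by (apply lt_0_INR; lia).
  assert (HI : 0 <= inner (h N) (f N) N q) by (apply inner_nonneg; [lia|apply Hf]).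
  assert (HqQ : INR q <= Q N).
  { destruct (base_Int_part (Q N)) as [B1 _]. unfold nbelow in Hq.
    assert (Z.of_nat q <= Int_part (Q N))%Z by lia.
    rewrite INR_IZR_INZ. apply Rle_trans with (IZR (Int_part (Q N))); [apply IZR_le; lia|lra]. }
  pose proof (HC N q HN ltac:(lia) HqQ) as Hb.
  assert (0 <= / INR q) by (left; apply Rinv_0_lt_compat; lra).
  unfold Rdiv. rewrite !Rabs_mult, (Rabs_right (/ INR q)), (Rabs_right (inner _ _ _ _)) by lra.
  replace (C * Rpower (INR N) eps * (1 * / INR q * inner (h N) (f N) N q))
    with ((C * Rpower (INR N) eps) * (/ INR q * inner (h N) (f N) N q)) by ring.
  rewrite Rmult_assoc. apply Rmult_le_compat_r; [apply Rmult_le_pos; lra| exact Hb].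
Qed.
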